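(* Let $\rho:E\to B$ be a universal stream covering, where $B$ is a path-ordered stream. The following are equivalent: (1) the preorder $\leqslant_E$ is antisymmetric; (2) every stream map $\vec{\mathbb{S}}\to B$ whose underlying continuous map $\mathbb{S}\to UB$ is null-homotopic is constant.
   Context: A circulation on a space $X$ assigns to each open $V\subset X$ a preorder $\leqslant_V$ on $V$ such that for every collection $\mathcal{O}$ of open sets, $\leqslant_{\bigcup\mathcal{O}}$ is the preorder with smallest graph containing $\bigcup_{V\in\mathcal{O}}\mathrm{graph}(\leqslant_V)$. A stream is a space with a circulation ($\leqslant_X$ is the preorder on $X$ itself); a stream map $f:X\to Y$ is continuous with $f(x)\leqslant_V f(y)$ whenever $x\leqslant_{f^{-1}V}y$ for all open $V\subset Y$. $U$ denotes the forgetful functor to spaces. $\vec\square[1]$ is $[0,1]$ with circulation $x\leqslant_V y$ iff $x\le y$ and $[x,y]\subset V$; a dipath on a stream $X$ is a stream map $\vec\square[1]\to X$. $X$ is path-ordered if whenever $V\subset X$ is open and $x\leqslant_V y$, there is a dipath from $x$ to $y$ with image in $V$. $\vec{\mathbb{S}}$ is the unit circle $\mathbb{S}\subset\mathbb{C}$ with circulation: $z\leqslant_V z'$ iff there exist reals $\theta\le\theta'$ with $z=e^{i\theta}$, $z'=e^{i\theta'}$ and $e^{i[\theta,\theta']}\subset V$. An open substream of $X$ is an open set $V$ with circulation $W\mapsto\leqslant_W$ ($W\subset V$ open). A stream covering is a surjective stream map $\rho:E\to B$ such that $B$ is covered by open substreams whose preimages are disjoint unions of open substreams each mapped by $\rho$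 isomorphically (as streams) onto the corresponding open substream; it is universal if $U\rho$ is a universal covering of spaces. *)

(* Defs.v *)
From Stdlib Require Import Reals Lra.
Open Scope R_scope.

Definition set (X : Type) := X -> Prop.

Record Space := { pt : Type; opn : set pt -> Prop }.

Definition union_fam {T : Type} (O : set (set T)) : set T :=
  fun x => exists V, O V /\ V x.

Definition is_topology (X : Space) : Prop :=
  opn X (fun _ => True) /\
  (forall O : set (set (pt X)), (forall V, O V -> opn X V) -> opn X (union_fam O)) /\
  (forall U V, opn X U -> opn X V -> opn X (fun x => U x /\ V x)).

Definition continuous (X Y : Space) (f : pt X -> pt Y) : Prop :=
  forall V, opn Y V -> opn X (fun x => V (f x)).

Definition image {A B : Type} (f : A -> B) (W : set A) : set B :=
  fun b => exists a, W a /\ f a = b.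

Definition prod_space (X Y : Space) : Space :=
  {| pt := (pt X * pt Y)%type;
     opn := fun W => forall p, W p ->
       exists U V, opn X U /\ opn Y V /\ U (fst p) /\ V (snd p) /\
         (forall a b, U a -> V b -> W (a, b)) |}.

Definition I_pt := { x : R | 0 <= x <= 1 }.

Definition I_space : Space :=
  {| pt := I_pt;
     opn := fun V => forall x, V x -> exists eps, 0 < eps /\
              forall y : I_pt, Rabs (proj1_sig y - proj1_sig x) < eps -> V y |}.

Lemma I0_prf : 0 <= 0 <= 1. Proof. lra. Qed.
Lemma I1_prf : 0 <= 1 <= 1. Proof. lra. Qed.
Definition I0 : I_pt := exist _ 0 I0_prf.
Definition I1 : I_pt := exist _ 1 I1_prf.

Definition S_pt := { p : R * R | (fst p)^2 + (snd p)^2 = 1 }.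

Lemma cis_prf (t : R) : (fst (cos t, sin t))^2 + (snd (cos t, sin t))^2 = 1.
Proof. simpl. pose proof (sin2_cos2 t) as H. unfold Rsqr in H. nra. Qed.

Definition cis (t : R) : S_pt := exist _ (cos t, sin t) (cis_prf t).

Definition S_dist (z w : S_pt) : R :=
  sqrt ((fst (proj1_sig z) - fst (proj1_sig w))^2 + (snd (proj1_sig z) - snd (proj1_sig w))^2).

Definition S_space : Space :=
  {| pt := S_pt;
     opn := fun V => forall z, V z -> exists eps, 0 < eps /\
              forall w : S_pt, S_dist z w < eps -> V w |}.

Definition null_homotopic (X Y : Space) (f : pt X -> pt Y) : Prop :=
  exists H : pt X * I_pt -> pt Y,
    continuous (prod_space X I_space) Y H /\
    (forall x, H (x, I0) = f x) /\
    (exists c, forall x, H (x, I1) = c).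

Definition path_connected (X : Space) : Prop :=
  forall x y : pt X, exists g : I_pt -> pt X,
    continuous I_space X g /\ g I0 = x /\ g I1 = y.

Definition simply_connected (X : Space) : Prop :=
  path_connected X /\
  forall f : S_pt -> pt X, continuous S_space X f -> null_homotopic S_space X f.

Definition homeo_onto {X Y : Space} (p : pt X -> pt Y) (W : set (pt X)) (V : set (pt Y)) : Prop :=
  (forall x, W x -> V (p x)) /\
  (forall x y, W x -> W y -> p x = p y -> x = y) /\
  (forall b, V b -> exists x, W x /\ p x = b) /\
  (forall V', opn Y V' -> (forall b, V' b -> V b) -> opn X (fun x => W x /\ V' (p x))) /\
  (forall W', opn X W' -> (forall x, W' x -> W x) -> opn Y (image p W')).

Definition evenly_covered {X Y : Space} (p : pt X -> pt Y) (V : set (pt Y))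
  (good : set (pt X) -> Prop) : Prop :=
  exists F : set (set (pt X)),
    (forall W, F W -> opn X W /\ good W) /\
    (forall W W', F W -> F W' -> W <> W' -> forall x, W x -> W' x -> False) /\
    (forall x, V (p x) <-> union_fam F x).

Definition covering_map (X Y : Space) (p : pt X -> pt Y) : Prop :=
  continuous X Y p /\
  (forall b, exists x, p x = b) /\
  exists Vs : set (set (pt Y)),
    (forall b, exists V, Vs V /\ V b) /\
    (forall V, Vs V -> opn Y V /\ evenly_covered p V (fun W => homeo_onto p W V)).

Definition universal_covering (X Y : Space) (p : pt X -> pt Y) : Prop :=
  covering_map X Y p /\ simply_connected X.

Record Stream := { U : Space; circ : set (pt (U)) -> pt U -> pt U -> Prop }.

Definition preorder_on {T : Type} (S : set T) (R : T -> T -> Prop) : Prop :=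
  (forall x y, R x y -> S x /\ S y) /\
  (forall x, S x -> R x x) /\
  (forall x y z, R x y -> R y z -> R x z).

Definition is_circulation (X : Stream) : Prop :=
  (forall V, opn (U X) V -> preorder_on V (circ X V)) /\
  forall O : set (set (pt (U X))), (forall V, O V -> opn (U X) V) ->
    let S := union_fam O in
    let G := fun x y => exists V, O V /\ circ X V x y in
    preorder_on S (circ X S) /\
    (forall x y, G x y -> circ X S x y) /\
    (forall R, preorder_on S R -> (forall x y, G x y -> R x y) ->
       forall x y, circ X S x y -> R x y).

Definition is_stream (X : Stream) : Prop := is_topology (U X) /\ is_circulation X.

Definition stream_map (X Y : Stream) (f : pt (U X) -> pt (U Y)) : Prop :=
  continuous (U X) (U Y) f /\
  forall V, opn (U Y) V -> forall x y,
    circ X (fun z => V (f z)) x y -> circ Y V (f x) (f y).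

Definition dI : Stream :=
  {| U := I_space;
     circ := fun V x y => proj1_sig x <= proj1_sig y /\
               forall z : I_pt, proj1_sig x <= proj1_sig z <= proj1_sig y -> V z |}.

Definition dS : Stream :=
  {| U := S_space;
     circ := fun V z z' => exists th th', th <= th' /\ z = cis th /\ z' = cis th' /\
               forall t, th <= t <= th' -> V (cis t) |}.

Definition dipath (X : Stream) (g : I_pt -> pt (U X)) : Prop := stream_map dI X g.

Definition path_ordered (X : Stream) : Prop :=
  forall V, opn (U X) V -> forall x y, circ X V x y ->
    exists g, dipath X g /\ g I0 = x /\ g I1 = y /\ forall t, V (g t).

Definition stream_iso_onto {E B : Stream} (rho : pt (U E) -> pt (U B))
  (W : set (pt (U E))) (V : set (pt (U B))) : Prop :=
  homeo_onto rho W V /\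
  (forall V', opn (U B) V' -> (forall b, V' b -> V b) ->
     forall x y, circ E (fun z => W z /\ V' (rho z)) x y -> circ B V' (rho x) (rho y)) /\
  (forall W', opn (U E) W' -> (forall z, W' z -> W z) ->
     forall x y, W x -> W y -> circ B (image rho W') (rho x) (rho y) -> circ E W' x y).

Definition stream_covering (E B : Stream) (rho : pt (U E) -> pt (U B)) : Prop :=
  stream_map E B rho /\
  (forall b, exists x, rho x = b) /\
  exists Vs : set (set (pt (U B))),
    (forall b, exists V, Vs V /\ V b) /\
    (forall V, Vs V -> opn (U B) V /\ evenly_covered rho V (fun W => stream_iso_onto rho W V)).

Definition universal_stream_covering (E B : Stream) (rho : pt (U E) -> pt (U B)) : Prop :=
  stream_covering E B rho /\ universal_covering (U E) (U B) rho.

Definition full {T : Type} : set T := fun _ => True.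

(* Main.v *)
Require Import Defs.
From Stdlib Require Import Reals.
From Stdlib Require Import Lra Ratan Classical ClassicalEpsilon FunctionalExtensionality PropExtensionality ProofIrrelevance.
Open Scope R_scope.

Lemma cousin (G : R -> R -> Prop) (a b : R) : a <= b ->
  (forall t, a <= t <= b -> exists d, 0 < d /\ forall u v, a <= u -> u <= t -> t <= v -> v <= b -> v - u < d -> G u v) ->
  (forall u v w, a <= u -> u <= v -> v <= w -> w <= b -> G u v -> G v w -> G u w) ->
  G a b.
Proof.
  intros Hab Hloc Hadd.
  set (S := fun x => a <= x <= b /\ G a x).
  assert (Sa : S a).
  { split. lra. destruct (Hloc a) as [d [Hd H]]; [lra|]. apply H; lra. }
  assert (Sb : bound S). { exists b. intros x [Hx _]. lra. }
  destruct (completeness S Sb (ex_intro _ a Sa)) as [m [Hub Hlub]].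
  assert (Ham : a <= m) by (apply Hub; exact Sa).
  assert (Hmb : m <= b) by (apply Hlub; intros x [Hx _]; lra).
  destruct (Hloc m) as [d [Hd Hm]]; [lra|].
  assert (Hx : exists x, S x /\ m - d < x).
  { apply NNPP. intro Hn.
    assert (is_upper_bound S (m - d)).
    { intros x Sx. destruct (Rle_or_lt x (m - d)) as [h|h]; auto.
      exfalso. apply Hn. exists x. auto. }
    apply Hlub in H. lra. }
  destruct Hx as [x [[Hx1 Hx2] Hxd]].
  assert (Hxm : x <= m) by (apply Hub; split; auto).
  assert (Gam : G a m).
  { apply Hadd with x; try lra. auto. apply Hm; lra. }
  destruct (Rle_or_lt b m) as [h|h].
  - replace b with m by lra. exact Gam.
  - exfalso. set (v := Rmin b (m + d/2)).
    assert (v <= b) by (unfold v; apply Rmin_l).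
    assert (v <= m + d/2) by (unfold v; apply Rmin_r).
    assert (m < v) by (unfold v; apply Rmin_glb_lt; lra).
    assert (S v). { split. lra. apply Hadd with m; try lra. auto. apply Hm; lra. }
    apply Hub in H2. lra.
Qed.

Lemma cousin2 (G : R -> R -> R -> R -> Prop) a b c d : a <= b -> c <= d ->
  (forall x y, a <= x <= b -> c <= y <= d -> exists e, 0 < e /\ forall x1 x2 y1 y2,
     a <= x1 -> x1 <= x -> x <= x2 -> x2 <= b -> c <= y1 -> y1 <= y -> y <= y2 -> y2 <= d ->
     x2 - x1 < e -> y2 - y1 < e -> G x1 x2 y1 y2) ->
  (forall x1 x2 x3 y1 y2, a<=x1 -> x1<=x2 -> x2<=x3 -> x3<=b -> c<=y1 -> y1<=y2 -> y2<=d ->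
     G x1 x2 y1 y2 -> G x2 x3 y1 y2 -> G x1 x3 y1 y2) ->
  (forall x1 x2 y1 y2 y3, a<=x1 -> x1<=x2 -> x2<=b -> c<=y1 -> y1<=y2 -> y2<=y3 -> y3<=d ->
     G x1 x2 y1 y2 -> G x1 x2 y2 y3 -> G x1 x2 y1 y3) ->
  G a b c d.
Proof.
  intros Hab Hcd Hloc Hh Hv.
  apply (cousin (fun y1 y2 => G a b y1 y2) c d Hcd).
  2:{ intros u v w ? ? ? ? ? ?. apply Hv with v; lra || auto. }
  intros y Hy.
  assert (HH : (fun x1 x2 => exists e, 0 < e /\ forall y1 y2, c <= y1 -> y1 <= y -> y <= y2 -> y2 <= d ->
                 y2 - y1 < e -> G x1 x2 y1 y2) a b).
  { apply (cousin (fun x1 x2 => exists e, 0 < e /\ forall y1 y2, c <= y1 -> y1 <= y -> y <= y2 -> y2 <= d ->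
                 y2 - y1 < e -> G x1 x2 y1 y2) a b Hab).
    - intros x Hx. destruct (Hloc x y Hx Hy) as [e [He H]].
      exists e. split; [exact He|]. intros u v ? ? ? ? ?. exists e. split; [exact He|].
      intros. apply H; auto.
    - intros u v w ? ? ? ? [e1 [He1 H1]] [e2 [He2 H2]].
      exists (Rmin e1 e2). split. apply Rmin_glb_lt; auto.
      intros y1 y2 ? ? ? ? ?.
      assert (Rmin e1 e2 <= e1) by apply Rmin_l. assert (Rmin e1 e2 <= e2) by apply Rmin_r.
      apply (Hh u v w y1 y2); try lra. apply H1; auto; lra. apply H2; auto; lra. }
  destruct HH as [e [He H]]. exists e. split; auto.
Qed.


Lemma PI_gt3 : 3 < PI. Proof. pose proof PI2_3_2. lra. Qed.

Lemma sin_abs_le x : Rabs (sin x) <= Rabs x.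
Proof.
  assert (Hp : forall y, 0 < y -> Rabs (sin y) <= y).
  { intros y Hy. pose proof (sin_lt_x y Hy). pose proof (SIN_bound y). pose proof PI_gt3.
    destruct (Rle_or_lt 1 y).
    - apply Rabs_le; lra.
    - assert (0 <= sin y) by (apply sin_ge_0; lra). apply Rabs_le; lra. }
  destruct (Rtotal_order x 0) as [h|[h|h]].
  - rewrite <- (Ropp_involutive x), sin_neg, Rabs_Ropp, Rabs_Ropp. rewrite (Rabs_right (-x)) by lra. apply Hp; lra.
  - subst. rewrite sin_0, Rabs_R0. lra.
  - rewrite (Rabs_right x) by lra. apply Hp; lra.
Qed.

Lemma sin_lip a b : Rabs (sin a - sin b) <= Rabs (a - b).
Proof.
  rewrite form4. rewrite !Rabs_mult.
  pose proof (sin_abs_le ((a - b)/2)). pose proof (COS_bound ((a+b)/2)).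
  assert (Rabs (cos ((a + b) / 2)) <= 1) by (apply Rabs_le; lra).
  replace (Rabs ((a-b)/2)) with (Rabs (a-b) / 2) in H.
  2:{ unfold Rdiv. rewrite Rabs_mult. rewrite (Rabs_right (/2)) by lra. reflexivity. }
  rewrite (Rabs_right 2) by lra.
  pose proof (Rabs_pos (sin ((a - b) / 2))). pose proof (Rabs_pos (cos ((a + b) / 2))).
  nra.
Qed.

Lemma cos_lip a b : Rabs (cos a - cos b) <= Rabs (a - b).
Proof.
  rewrite form2. rewrite !Rabs_mult.
  pose proof (sin_abs_le ((a - b)/2)). pose proof (SIN_bound ((a+b)/2)).
  assert (Rabs (sin ((a + b) / 2)) <= 1) by (apply Rabs_le; lra).
  replace (Rabs ((a-b)/2)) with (Rabs (a-b) / 2) in H.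
  2:{ unfold Rdiv. rewrite Rabs_mult. rewrite (Rabs_right (/2)) by lra. reflexivity. }
  replace (Rabs (-2)) with 2 by (rewrite Rabs_left by lra; lra).
  pose proof (Rabs_pos (sin ((a - b) / 2))). pose proof (Rabs_pos (sin ((a + b) / 2))).
  nra.
Qed.

Lemma sqrt_lt_sq X e : 0 <= X -> 0 < e -> X < e * e -> sqrt X < e.
Proof.
  intros. rewrite <- (sqrt_square e) by lra. apply sqrt_lt_1_alt. lra.
Qed.

Lemma S_dist_cis a b : S_dist (cis a) (cis b) <= 2 * Rabs (a - b).
Proof.
  unfold S_dist, cis; simpl.
  pose proof (cos_lip a b). pose proof (sin_lip a b).
  rewrite <- (sqrt_square (2 * Rabs (a - b))) by (pose proof (Rabs_pos (a-b)); lra).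
  apply sqrt_le_1_alt.
  pose proof (Rabs_pos (a-b)).
  assert ((cos a - cos b)^2 <= Rabs (a-b) * Rabs (a-b)).
  { rewrite <- (pow2_abs (cos a - cos b)). pose proof (Rabs_pos (cos a - cos b)). simpl. nra. }
  assert ((sin a - sin b)^2 <= Rabs (a-b) * Rabs (a-b)).
  { rewrite <- (pow2_abs (sin a - sin b)). pose proof (Rabs_pos (sin a - sin b)). simpl. nra. }
  nra.
Qed.

Lemma fst_le_dist z w : Rabs (fst (proj1_sig z) - fst (proj1_sig w)) <= S_dist z w.
Proof.
  unfold S_dist. rewrite <- sqrt_Rsqr_abs. apply sqrt_le_1_alt. unfold Rsqr.
  set (p := fst (proj1_sig z) - fst (proj1_sig w)). set (q := snd (proj1_sig z) - snd (proj1_sig w)).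
  pose proof (pow2_ge_0 q). simpl in *. nra.
Qed.


Definition clampR t := Rmax 0 (Rmin 1 t).
Lemma clamp_prf t : 0 <= clampR t <= 1.
Proof. unfold clampR. split. apply Rmax_l. apply Rmax_lub. lra. apply Rmin_l. Qed.
Definition clampI t : I_pt := exist _ (clampR t) (clamp_prf t).

Lemma I_eq (s t : I_pt) : proj1_sig s = proj1_sig t -> s = t.
Proof. destruct s as [s hs], t as [t ht]; simpl; intros ->. f_equal. apply proof_irrelevance. Qed.

Lemma clampR_id t : 0 <= t <= 1 -> clampR t = t.
Proof. intros. unfold clampR. rewrite Rmin_right by lra. rewrite Rmax_right by lra. reflexivity. Qed.

Lemma clampI_val t : 0 <= t <= 1 -> proj1_sig (clampI t) = t.
Proof. intros. simpl. apply clampR_id; auto. Qed.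

Lemma clampI_id (s : I_pt) : clampI (proj1_sig s) = s.
Proof. apply I_eq. apply clampI_val. destruct s; auto. Qed.

Lemma clampI_0 : clampI 0 = I0. Proof. apply I_eq. simpl. apply clampR_id. lra. Qed.
Lemma clampI_1 : clampI 1 = I1. Proof. apply I_eq. simpl. apply clampR_id. lra. Qed.

Lemma clampR_lip a b : Rabs (clampR a - clampR b) <= Rabs (a - b).
Proof.
  pose proof (Rle_abs (a-b)). pose proof (Rle_abs (-(a-b))). rewrite Rabs_Ropp in H0.
  unfold clampR, Rmax, Rmin.
  repeat (destruct Rle_dec); apply Rabs_le; split; lra.
Qed.

Lemma S_eq (z w : S_pt) : proj1_sig z = proj1_sig w -> z = w.
Proof. destruct z as [z hz], w as [w hw]; simpl; intros ->. f_equal. apply proof_irrelevance. Qed.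

Lemma cis_2PI : cis (2 * PI) = cis 0.
Proof. apply S_eq. simpl. rewrite cos_2PI, sin_2PI, cos_0, sin_0. reflexivity. Qed.

Lemma circ_pre (X : Stream) V : is_circulation X -> opn (U X) V -> preorder_on V (circ X V).
Proof. intros [H _] HV. apply H; auto. Qed.

Lemma circ_trans (X : Stream) V x y z : is_circulation X -> opn (U X) V ->
  circ X V x y -> circ X V y z -> circ X V x z.
Proof. intros HX HV. destruct (circ_pre X V HX HV) as [_ [_ T]]. apply T. Qed.

Lemma circ_refl (X : Stream) V x : is_circulation X -> opn (U X) V -> V x -> circ X V x x.
Proof. intros HX HV. destruct (circ_pre X V HX HV) as [_ [R _]]. apply R. Qed.

Lemma circ_dom (X : Stream) V x y : is_circulation X -> opn (U X) V -> circ X V x y -> V x /\ V y.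
Proof. intros HX HV. destruct (circ_pre X V HX HV) as [D _]. apply D. Qed.

Lemma set_ext {T} (A B : set T) : (forall x, A x <-> B x) -> A = B.
Proof. intros H. apply functional_extensionality. intros x. apply propositional_extensionality. auto. Qed.

Lemma circ_mono (X : Stream) W O x y : is_circulation X -> opn (U X) W -> opn (U X) O ->
  (forall z, W z -> O z) -> circ X W x y -> circ X O x y.
Proof.
  intros [_ HX] HW HO Hsub Hc.
  set (Fm := fun V : set (pt (U X)) => V = W \/ V = O).
  destruct (HX Fm) as [_ [Hgen _]].
  { intros V [-> | ->]; auto. }
  assert (Heq : union_fam Fm = O).
  { apply set_ext. intros z. split.
    - intros [V [[-> | ->] Hz]]; auto.
    - intros Hz. exists O. split; auto. right; auto. }
  rewrite <- Heq. apply Hgen. exists W. split; auto. left; auto.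
Qed.


Definition sheet (E B : Stream) (rho : pt (U E) -> pt (U B)) (W : set (pt (U E))) (V : set (pt (U B))) :=
  opn (U E) W /\ stream_iso_onto rho W V.

Lemma cov_at E B rho : stream_covering E B rho -> forall b, exists V (Fm : set (set (pt (U E)))),
  V b /\ opn (U B) V /\ (forall W, Fm W -> sheet E B rho W V) /\
  (forall W W', Fm W -> Fm W' -> W <> W' -> forall x, W x -> W' x -> False) /\
  (forall x, V (rho x) <-> union_fam Fm x).
Proof.
  intros [_ [_ [Vs [Hcov HVs]]]] b.
  destruct (Hcov b) as [V [HV Vb]]. destruct (HVs V HV) as [Vo [Fm [HF [Hd Hu]]]].
  exists V, Fm. split; [auto|]. split; [auto|]. split; [intros W HW; exact (HF W HW)|].
  split; auto.
Qed.

Definition cont1 (X : Space) a b (g : R -> pt X) := forall t, a <= t <= b -> forall O, opn X O -> O (g t) ->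
  exists e, 0 < e /\ forall s, a <= s <= b -> Rabs (s - t) < e -> O (g s).

Definition cont2 (X : Space) a b c d (L : R -> R -> pt X) := forall x y, a <= x <= b -> c <= y <= d ->
  forall O, opn X O -> O (L x y) ->
  exists e, 0 < e /\ forall x' y', a <= x' <= b -> c <= y' <= d -> Rabs (x' - x) < e -> Rabs (y' - y) < e ->
     O (L x' y').

Lemma abs_lt_of a b e : a - e < b -> b < a + e -> Rabs (b - a) < e.
Proof. intros. apply Rabs_def1; lra. Qed.

Lemma lift_unique_iff E B rho : stream_covering E B rho ->
  forall a b g1 g2, cont1 (U E) a b g1 -> cont1 (U E) a b g2 ->
  (forall t, a <= t <= b -> rho (g1 t) = rho (g2 t)) ->
  forall u v, a <= u -> u <= v -> v <= b -> (g1 u = g2 u <-> g1 v = g2 v).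
Proof.
  intros Hc a b g1 g2 H1 H2 Hr u v Hau Huv Hvb.
  apply (cousin (fun u v => g1 u = g2 u <-> g1 v = g2 v) u v Huv).
  2:{ intros p q r _ _ _ _ Hp Hq. tauto. }
  intros t Ht.
  destruct (cov_at E B rho Hc (rho (g1 t))) as [V [Fm [Vb [Vo [Hsh [Hdis Hun]]]]]].
  destruct (proj1 (Hun (g1 t)) Vb) as [W1 [F1 W1t]].
  assert (V (rho (g2 t))) by (rewrite <- Hr by lra; auto).
  destruct (proj1 (Hun (g2 t)) H) as [W2 [F2 W2t]].
  destruct (Hsh W1 F1) as [W1o [[_ [Hinj1 _]] _]].
  destruct (Hsh W2 F2) as [W2o _].
  destruct (H1 t ltac:(lra) W1 W1o W1t) as [e1 [He1 C1]].
  destruct (H2 t ltac:(lra) W2 W2o W2t) as [e2 [He2 C2]].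
  exists (Rmin e1 e2). split. apply Rmin_glb_lt; auto.
  intros p q Hp Hpt Htq Hq Hw.
  pose proof (Rmin_l e1 e2). pose proof (Rmin_r e1 e2).
  assert (A1 : W1 (g1 p) /\ W1 (g1 q)) by (split; apply C1; try lra; apply abs_lt_of; lra).
  assert (A2 : W2 (g2 p) /\ W2 (g2 q)) by (split; apply C2; try lra; apply abs_lt_of; lra).
  destruct (classic (W1 = W2)) as [Heq|Hne].
  - subst W2. split; intros _; apply Hinj1; try tauto; apply Hr; lra.
  - split; intros He; exfalso.
    + apply (Hdis W1 W2 F1 F2 Hne (g1 p)); try tauto. rewrite He; tauto.
    + apply (Hdis W1 W2 F1 F2 Hne (g1 q)); try tauto. rewrite He; tauto.
Qed.

Lemma lift_unique E B rho : stream_covering E B rho ->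
  forall a b g1 g2, cont1 (U E) a b g1 -> cont1 (U E) a b g2 ->
  (forall t, a <= t <= b -> rho (g1 t) = rho (g2 t)) ->
  forall t0, a <= t0 <= b -> g1 t0 = g2 t0 -> forall t, a <= t <= b -> g1 t = g2 t.
Proof.
  intros Hc a b g1 g2 H1 H2 Hr t0 Ht0 He t Ht.
  destruct (Rle_or_lt t0 t).
  - apply (lift_unique_iff E B rho Hc a b g1 g2 H1 H2 Hr t0 t); auto; lra.
  - apply (lift_unique_iff E B rho Hc a b g1 g2 H1 H2 Hr t t0); auto; lra.
Qed.

Definition sec (E B : Stream) (rho : pt (U E) -> pt (U B)) (inh : inhabited (pt (U E)))
  (W : set (pt (U E))) (b : pt (U B)) : pt (U E) :=
  epsilon inh (fun x => W x /\ rho x = b).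

Lemma sec_spec E B rho inh W V b : homeo_onto rho W V -> V b ->
  W (sec E B rho inh W b) /\ rho (sec E B rho inh W b) = b.
Proof.
  intros [_ [_ [Hs _]]] Vb. unfold sec. apply epsilon_spec. apply Hs; auto.
Qed.

Lemma sec_eq E B rho inh W V x : homeo_onto rho W V -> W x -> sec E B rho inh W (rho x) = x.
Proof.
  intros Hh Wx. destruct Hh as [H1 [H2 H3]].
  destruct (sec_spec E B rho inh W V (rho x) (conj H1 (conj H2 H3)) (H1 x Wx)) as [A B'].
  apply H2; auto.
Qed.

Lemma sec_open E B rho inh W V : is_topology (U E) -> sheet E B rho W V ->
  forall O, opn (U E) O -> forall b, V b -> O (sec E B rho inh W b) ->
  exists O', opn (U B) O' /\ O' b /\ forall b', O' b' -> O (sec E B rho inh W b').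
Proof.
  intros [_ [_ Hint]] [Wo [Hh _]] O Oo b Vb Ob.
  exists (image rho (fun x => W x /\ O x)). split; [|split].
  - destruct Hh as [_ [_ [_ [_ H5]]]]. apply H5. apply Hint; auto. tauto.
  - exists (sec E B rho inh W b). destruct (sec_spec E B rho inh W V b Hh Vb). tauto.
  - intros b' [x [[Wx Ox] <-]]. rewrite (sec_eq E B rho inh W V x Hh Wx). auto.
Qed.


Lemma cont2_swap X a b c d L : cont2 X a b c d L -> cont2 X c d a b (fun y x => L x y).
Proof.
  intros H y x Hy Hx O Oo Ox. destruct (H x y Hx Hy O Oo Ox) as [e [He Hc]].
  exists e. split; auto.
Qed.

Lemma cont2_row X a b c d L y : cont2 X a b c d L -> c <= y <= d -> cont1 X a b (fun x => L x y).
Proof.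
  intros H Hy t Ht O Oo Ot. destruct (H t y Ht Hy O Oo Ot) as [e [He Hc]].
  exists e. split; auto. intros s Hs Hst. apply Hc; auto. rewrite Rminus_diag, Rabs_R0. auto.
Qed.

Lemma cont2_col X a b c d L x : cont2 X a b c d L -> a <= x <= b -> cont1 X c d (fun y => L x y).
Proof. intros H Hx. apply (cont2_row X c d a b (fun y x => L x y) x); auto. apply cont2_swap; auto. Qed.

Lemma cont2_sub X a b c d L a' b' c' d' : cont2 X a b c d L -> a <= a' -> b' <= b -> c <= c' -> d' <= d ->
  cont2 X a' b' c' d' L.
Proof.
  intros H ? ? ? ? x y Hx Hy O Oo Ox. destruct (H x y ltac:(lra) ltac:(lra) O Oo Ox) as [e [He Hc]].
  exists e. split; auto. intros. apply Hc; auto; lra.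
Qed.

Lemma paste_h X x1 x2 x3 y1 y2 L1 L2 : x1 <= x2 -> x2 <= x3 ->
  cont2 X x1 x2 y1 y2 L1 -> cont2 X x2 x3 y1 y2 L2 -> (forall y, y1 <= y <= y2 -> L1 x2 y = L2 x2 y) ->
  cont2 X x1 x3 y1 y2 (fun x y => if Rle_dec x x2 then L1 x y else L2 x y).
Proof.
  intros h12 h23 C1 C2 Heq x y Hx Hy O Oo Ox.
  destruct (Rtotal_order x x2) as [hl|[he|hg]].
  - destruct (Rle_dec x x2) as [_|n]; [|lra].
    destruct (C1 x y ltac:(lra) Hy O Oo Ox) as [e [He Hc]].
    exists (Rmin e (x2 - x)). split. apply Rmin_glb_lt; lra.
    intros x' y' Hx' Hy' Ax Ay. pose proof (Rmin_l e (x2-x)). pose proof (Rmin_r e (x2-x)).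
    pose proof (Rabs_def2 _ _ Ax).
    destruct (Rle_dec x' x2); [|lra]. apply Hc; auto; try lra; apply abs_lt_of; apply Rabs_def2 in Ax; lra.
  - subst x. destruct (Rle_dec x2 x2) as [_|n]; [|lra].
    destruct (C1 x2 y ltac:(lra) Hy O Oo Ox) as [e1 [He1 Hc1]].
    rewrite Heq in Ox by auto.
    destruct (C2 x2 y ltac:(lra) Hy O Oo Ox) as [e2 [He2 Hc2]].
    exists (Rmin e1 e2). split. apply Rmin_glb_lt; lra.
    intros x' y' Hx' Hy' Ax Ay. pose proof (Rmin_l e1 e2). pose proof (Rmin_r e1 e2).
    destruct (Rle_dec x' x2).
    + apply Hc1; auto; try lra; apply abs_lt_of; apply Rabs_def2 in Ax; apply Rabs_def2 in Ay; lra.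
    + apply Hc2; auto; try lra; apply abs_lt_of; apply Rabs_def2 in Ax; apply Rabs_def2 in Ay; lra.
  - destruct (Rle_dec x x2) as [n|_]; [lra|].
    destruct (C2 x y ltac:(lra) Hy O Oo Ox) as [e [He Hc]].
    exists (Rmin e (x - x2)). split. apply Rmin_glb_lt; lra.
    intros x' y' Hx' Hy' Ax Ay. pose proof (Rmin_l e (x-x2)). pose proof (Rmin_r e (x-x2)).
    pose proof (Rabs_def2 _ _ Ax).
    destruct (Rle_dec x' x2); [lra|]. apply Hc; auto; try lra; apply abs_lt_of; apply Rabs_def2 in Ax; lra.
Qed.

Lemma paste_v X x1 x2 y1 y2 y3 L1 L2 : y1 <= y2 -> y2 <= y3 ->
  cont2 X x1 x2 y1 y2 L1 -> cont2 X x1 x2 y2 y3 L2 -> (forall x, x1 <= x <= x2 -> L1 x y2 = L2 x y2) ->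
  cont2 X x1 x2 y1 y3 (fun x y => if Rle_dec y y2 then L1 x y else L2 x y).
Proof.
  intros h12 h23 C1 C2 Heq.
  apply (cont2_swap X y1 y3 x1 x2 (fun y x => if Rle_dec y y2 then L1 x y else L2 x y)).
  apply paste_h; auto; apply cont2_swap; auto.
Qed.

Definition Good2 (E B : Stream) (rho : pt (U E) -> pt (U B)) (F : R -> R -> pt (U B)) x1 x2 y1 y2 :=
  forall e, rho e = F x1 y2 -> exists L, cont2 (U E) x1 x2 y1 y2 L /\
     (forall x y, x1 <= x <= x2 -> y1 <= y <= y2 -> rho (L x y) = F x y) /\ L x1 y2 = e.

Lemma lift2 E B rho (inh : inhabited (pt (U E))) : is_topology (U E) -> stream_covering E B rho ->
  forall a b c d F, a <= b -> c <= d -> cont2 (U B) a b c d F -> Good2 E B rho F a b c d.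
Proof.
  intros Htop Hc a b c d F Hab Hcd HF.
  apply cousin2; auto.
  -
    intros x y Hx Hy.
    destruct (cov_at E B rho Hc (F x y)) as [V [Fm [Vb [Vo [Hsh [Hdis Hun]]]]]].
    destruct (HF x y Hx Hy V Vo Vb) as [e [He HV]].
    exists e. split; auto.
    intros x1 x2 y1 y2 ? ? ? ? ? ? ? ? Wx Wy e0 He0.
    assert (HVin : forall x' y', x1 <= x' <= x2 -> y1 <= y' <= y2 -> V (F x' y')).
    { intros x' y' ? ?. apply HV; try lra; apply abs_lt_of; lra. }
    assert (V (rho e0)) by (rewrite He0; apply HVin; lra).
    destruct (proj1 (Hun e0) H7) as [W [FW We0]].
    destruct (Hsh W FW) as [Wo [Hh Hst]].
    exists (fun x y => sec E B rho inh W (F x y)). split; [|split].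
    + intros x' y' Hx' Hy' O Oo Ox.
      destruct (sec_open E B rho inh W V Htop (Hsh W FW) O Oo (F x' y') (HVin x' y' Hx' Hy') Ox)
        as [O' [O'o [O'b HO']]].
      destruct (HF x' y' ltac:(lra) ltac:(lra) O' O'o O'b) as [e' [He' Hc']].
      exists e'. split; auto. intros. apply HO'. apply Hc'; auto; lra.
    + intros x' y' Hx' Hy'. apply (sec_spec E B rho inh W V); auto.
    + rewrite <- He0. apply (sec_eq E B rho inh W V); auto.
  -
    intros x1 x2 x3 y1 y2 ? ? ? ? ? ? ? G1 G2 e0 He0.
    destruct (G1 e0 He0) as [L1 [C1 [R1 E1]]].
    destruct (G2 (L1 x2 y2)) as [L2 [C2 [R2 E2]]]. { apply R1; lra. }
    assert (Hedge : forall y, y1 <= y <= y2 -> L1 x2 y = L2 x2 y).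
    { apply (lift_unique E B rho Hc y1 y2 (fun y => L1 x2 y) (fun y => L2 x2 y)) with (t0 := y2).
      - apply (cont2_col _ x1 x2); auto; lra.
      - apply (cont2_col _ x2 x3); auto; lra.
      - intros t Ht. rewrite R1, R2; auto; lra.
      - lra.
      - auto. }
    exists (fun x y => if Rle_dec x x2 then L1 x y else L2 x y). split; [|split].
    + apply paste_h; auto.
    + intros x y Hx Hy. destruct (Rle_dec x x2); [apply R1|apply R2]; auto; lra.
    + destruct (Rle_dec x1 x2); [auto|lra].
  -
    intros x1 x2 y1 y2 y3 ? ? ? ? ? ? ? G1 G2 e0 He0.
    destruct (G2 e0 He0) as [Lu [Cu [Ru Eu]]].
    destruct (G1 (Lu x1 y2)) as [Ll [Cl [Rl El]]]. { apply Ru; lra. }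
    assert (Hedge : forall x, x1 <= x <= x2 -> Ll x y2 = Lu x y2).
    { apply (lift_unique E B rho Hc x1 x2 (fun x => Ll x y2) (fun x => Lu x y2)) with (t0 := x1).
      - apply (cont2_row _ x1 x2 y1 y2); auto; lra.
      - apply (cont2_row _ x1 x2 y2 y3); auto; lra.
      - intros t Ht. rewrite Rl, Ru; auto; lra.
      - lra.
      - auto. }
    exists (fun x y => if Rle_dec y y2 then Ll x y else Lu x y). split; [|split].
    + apply paste_v; auto.
    + intros x y Hx Hy. destruct (Rle_dec y y2); [apply Rl|apply Ru]; auto; lra.
    + destruct (Rle_dec y3 y2); auto.
      assert (y3 = y2) by lra. subst y3. rewrite El. exact Eu.
Qed.


Lemma cont_cos_minus w : continuity (fun s => cos s - w).
Proof.
  change (continuity (cos - fct_cte w)%F). apply continuity_minus. apply continuity_cos.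
  apply continuity_const. intros ? ?. reflexivity.
Qed.

Lemma angle_exists (z : S_pt) : exists th, 0 <= th <= 2 * PI /\ z = cis th.
Proof.
  destruct z as [[x y] hz]. simpl in hz.
  assert (Hx : -1 <= x <= 1) by (split; nra).
  pose proof PI_gt3.
  destruct (IVT_cor (fun s => cos s - x) 0 PI (cont_cos_minus x) ltac:(lra)) as [t0 [Ht0 Hc]].
  { rewrite cos_0, cos_PI. nra. }
  assert (Hs : 0 <= sin t0) by (apply sin_ge_0; lra).
  pose proof (sin2_cos2 t0). unfold Rsqr in H0.
  assert (Hcx : cos t0 = x) by lra.
  destruct (Rle_or_lt 0 y).
  - exists t0. split. lra. apply S_eq. simpl. f_equal; auto. nra.
  - exists (2 * PI - t0). split. lra. apply S_eq. simpl.
    rewrite cos_minus, sin_minus, cos_2PI, sin_2PI. f_equal. nra. nra.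
Qed.

Lemma H_cont2 (B : Space) (H : S_pt * I_pt -> pt B) : continuous (prod_space S_space I_space) B H ->
  forall a b c d, cont2 B a b c d (fun th t => H (cis th, clampI t)).
Proof.
  intros Hc a b c d x y Hx Hy O Oo Ox.
  destruct (Hc O Oo (cis x, clampI y) Ox) as [U1 [V1 [U1o [V1o [U1x [V1y Hbox]]]]]].
  simpl in U1o, V1o, U1x, V1y.
  destruct (U1o _ U1x) as [e1 [He1 HU]]. destruct (V1o _ V1y) as [e2 [He2 HV]].
  exists (Rmin (e1/2) e2). split. apply Rmin_glb_lt; lra.
  intros x' y' _ _ Ax Ay. pose proof (Rmin_l (e1/2) e2). pose proof (Rmin_r (e1/2) e2).
  apply (Hbox (cis x') (clampI y')).
  - apply HU. pose proof (S_dist_cis x x'). rewrite Rabs_minus_sym in Ax. lra.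
  - apply HV. simpl. pose proof (clampR_lip y' y). lra.
Qed.

Lemma chain E B rho f : is_stream E -> stream_covering E B rho -> stream_map dS B f ->
  forall a b (l : R -> pt (U E)), cont1 (U E) a b l -> (forall th, a <= th <= b -> rho (l th) = f (cis th)) ->
  forall u v, a <= u -> u <= v -> v <= b -> circ E full (l u) (l v).
Proof.
  intros [HtE HcE] Hc [_ Hf] a b l Hl Hrl u v Hau Huv Hvb.
  assert (Fo : opn (U E) full) by (destruct HtE; auto).
  apply (cousin (fun u v => circ E full (l u) (l v)) u v Huv).
  2:{ intros p q r _ _ _ _ ? ?. apply circ_trans with (l q); auto. }
  intros t Ht.
  destruct (cov_at E B rho Hc (rho (l t))) as [V [Fm [Vb [Vo [Hsh [Hdis Hun]]]]]].
  destruct (proj1 (Hun (l t)) Vb) as [W [FW Wt]].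
  destruct (Hsh W FW) as [Wo [[Hh1 [Hh2 [Hh3 Hh45]]] [_ Hst3]]].
  destruct (Hl t ltac:(lra) W Wo Wt) as [e [He Hc1]].
  exists e. split; auto.
  intros p q ? ? ? ? ?.
  assert (HW : forall s, p <= s <= q -> W (l s)).
  { intros s Hs. apply Hc1. lra. apply abs_lt_of; lra. }
  assert (Hcb : circ B V (f (cis p)) (f (cis q))).
  { apply Hf; auto. simpl. exists p, q. split; [lra|]. split; [auto|]. split; [auto|].
    intros s Hs. rewrite <- Hrl by lra. apply Hh1. apply HW; auto. }
  assert (Him : image rho W = V).
  { apply set_ext. intros bb. split.
    - intros [x [Wx <-]]. apply Hh1; auto.
    - intros Vbb. destruct (Hh3 bb Vbb) as [x [Wx Hx]]. exists x; auto. }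
  rewrite <- Hrl in Hcb by lra. rewrite <- Hrl in Hcb by lra. rewrite <- Him in Hcb.
  simpl. refine (circ_mono E W full (l p) (l q) HcE Wo Fo (fun z _ => I) _).
  apply (Hst3 W Wo (fun z h => h)); [apply HW; lra | apply HW; lra | exact Hcb].
Qed.

Lemma dir12 E B rho : is_stream E -> is_stream B -> universal_stream_covering E B rho ->
  (forall x y, circ E full x y -> circ E full y x -> x = y) ->
  forall f : pt (U dS) -> pt (U B), stream_map dS B f -> null_homotopic (U dS) (U B) f ->
  forall z z', f z = f z'.
Proof.
  intros HE HB [Hc _] Hanti f Hf [H [Hcont [H0 [c H1]]]].
  destruct Hc as [Hsm [Hsurj Hrest]]. assert (Hc : stream_covering E B rho) by (split; auto).
  destruct (Hsurj c) as [e0 He0].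
  pose (inh := inhabits e0).
  pose (F := fun th t => H (cis th, clampI t)).
  pose proof PI_gt3.
  assert (HF : cont2 (U B) 0 (2*PI) 0 1 F) by (apply H_cont2; auto).
  destruct (lift2 E B rho inh (proj1 HE) Hc 0 (2*PI) 0 1 F ltac:(lra) ltac:(lra) HF e0) as [L [CL [RL EL]]].
  { unfold F. rewrite clampI_1. rewrite H1. auto. }
  assert (Htop : L (2*PI) 1 = e0).
  { apply (lift_unique E B rho Hc 0 (2*PI) (fun x => L x 1) (fun _ => e0)) with (t0 := 0); auto; try lra.
    - apply cont2_row with 0 1; auto; lra.
    - intros t Ht O Oo Ot. exists 1. split; [lra|]. auto.
    - intros t Ht. rewrite RL by lra. unfold F. rewrite clampI_1, H1. auto. }
  assert (Hside : L 0 0 = L (2*PI) 0).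
  { apply (lift_unique E B rho Hc 0 1 (fun t => L 0 t) (fun t => L (2*PI) t)) with (t0 := 1); auto; try lra.
    - apply cont2_col with 0 (2*PI); auto; lra.
    - apply cont2_col with 0 (2*PI); auto; lra.
    - intros t Ht. rewrite !RL by lra. unfold F. rewrite cis_2PI. auto.
    - rewrite EL, Htop. auto. }
  set (l := fun th => L th 0).
  assert (Hl : cont1 (U E) 0 (2*PI) l) by (apply cont2_row with 0 1; auto; lra).
  assert (Hrl : forall th, 0 <= th <= 2*PI -> rho (l th) = f (cis th)).
  { intros th Hth. unfold l. rewrite RL by lra. unfold F. rewrite clampI_0, H0. auto. }
  assert (Hconst : forall th, 0 <= th <= 2*PI -> f (cis th) = rho (l 0)).
  { intros th Hth. rewrite <- Hrl by auto. f_equal. symmetry. apply Hanti.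
    - apply (chain E B rho f HE Hc Hf 0 (2*PI) l Hl Hrl); lra.
    - replace (l 0) with (l (2*PI)) by (unfold l; auto).
      apply (chain E B rho f HE Hc Hf 0 (2*PI) l Hl Hrl); lra. }
  intros z z'. destruct (angle_exists z) as [t [Ht ->]]. destruct (angle_exists z') as [t' [Ht' ->]].
  rewrite !Hconst; auto.
Qed.


Lemma Ipath_cont (X : Space) (g : I_pt -> pt X) : continuous I_space X g ->
  forall r O, opn X O -> O (g (clampI r)) ->
  exists e, 0 < e /\ forall r', Rabs (r' - r) < e -> O (g (clampI r')).
Proof.
  intros Hg r O Oo Or. destruct (Hg O Oo (clampI r) Or) as [e [He Hc]].
  exists e. split; auto. intros r' Hr. apply Hc. simpl.
  pose proof (clampR_lip r' r). lra.
Qed.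

Lemma dipath_sub (X : Stream) g O u v : dipath X g -> opn (U X) O -> 0 <= u -> u <= v -> v <= 1 ->
  (forall w, u <= w <= v -> O (g (clampI w))) -> circ X O (g (clampI u)) (g (clampI v)).
Proof.
  intros [_ Hg] Oo Hu Huv Hv Hw. apply Hg; auto. simpl.
  rewrite !clampR_id by lra. split; auto.
  intros z Hz. rewrite <- (clampI_id z). apply Hw. lra.
Qed.

Lemma const_dipath (X : Stream) c : is_stream X -> dipath X (fun _ => c).
Proof.
  intros [_ HX]. split.
  - intros O Oo x Ox. exists 1. split; [lra|]. auto.
  - intros O Oo a b [Hab Hin]. apply circ_refl; auto. apply (Hin a). lra.
Qed.

Definition catp {X : Type} (g1 g2 : I_pt -> X) (s : I_pt) : X :=
  if Rle_dec (proj1_sig s) (1/2) then g1 (clampI (2 * proj1_sig s)) else g2 (clampI (2 * proj1_sig s - 1)).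

Lemma catp_l {X : Type} (g1 g2 : I_pt -> X) w : 0 <= w <= 1/2 -> catp g1 g2 (clampI w) = g1 (clampI (2 * w)).
Proof. intros. unfold catp. rewrite clampI_val by lra. destruct Rle_dec; auto; lra. Qed.

Lemma catp_r {X : Type} (g1 g2 : I_pt -> X) w : g1 I1 = g2 I0 -> 1/2 <= w <= 1 ->
  catp g1 g2 (clampI w) = g2 (clampI (2 * w - 1)).
Proof.
  intros He Hw. unfold catp. rewrite clampI_val by lra. destruct Rle_dec; auto.
  replace w with (1/2) by lra. replace (2 * (1/2) - 1) with 0 by lra. replace (2 * (1/2)) with 1 by lra.
  rewrite clampI_0, clampI_1. auto.
Qed.

Lemma catp_dipath (X : Stream) g1 g2 : is_stream X -> dipath X g1 -> dipath X g2 -> g1 I1 = g2 I0 ->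
  dipath X (catp g1 g2).
Proof.
  intros [_ HX] H1 H2 He. split.
  - intros O Oo s Os. destruct s as [r hr]. simpl.
    assert (Hs : exist (fun x => 0 <= x <= 1) r hr = clampI r) by (apply I_eq; simpl; rewrite clampR_id; auto).
    rewrite Hs in Os.
    assert (Hy : forall y : I_pt, catp g1 g2 y = catp g1 g2 (clampI (proj1_sig y)) /\ 0 <= proj1_sig y <= 1).
    { intros y. rewrite clampI_id. split; auto. destruct y; auto. }
    destruct (Rtotal_order r (1/2)) as [hl|[he|hg]].
    + rewrite catp_l in Os by lra.
      destruct (Ipath_cont _ g1 (proj1 H1) (2 * r) O Oo Os) as [e1 [He1 C1]].
      exists (Rmin (e1/2) (1/2 - r)). split. apply Rmin_glb_lt; lra.
      intros y Hyr. pose proof (Rmin_l (e1/2) (1/2 - r)). pose proof (Rmin_r (e1/2) (1/2-r)).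
      destruct (Hy y) as [-> Hy1]. apply Rabs_def2 in Hyr.
      rewrite catp_l by lra. apply C1. apply abs_lt_of; lra.
    + subst r. pose proof Os as Os2. rewrite catp_l in Os by lra. rewrite catp_r in Os2 by (auto; lra).
      destruct (Ipath_cont _ g1 (proj1 H1) _ O Oo Os) as [e1 [He1 C1]].
      destruct (Ipath_cont _ g2 (proj1 H2) _ O Oo Os2) as [e2 [He2 C2]].
      exists (Rmin (e1/2) (e2/2)). split. apply Rmin_glb_lt; lra.
      intros y Hyr. pose proof (Rmin_l (e1/2) (e2/2)). pose proof (Rmin_r (e1/2) (e2/2)).
      destruct (Hy y) as [-> Hy1]. apply Rabs_def2 in Hyr.
      destruct (Rle_or_lt (proj1_sig y) (1/2)).
      * rewrite catp_l by lra. apply C1. apply abs_lt_of; lra.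
      * rewrite catp_r by (auto; lra). apply C2. apply abs_lt_of; lra.
    + rewrite catp_r in Os by (auto; lra).
      destruct (Ipath_cont _ g2 (proj1 H2) _ O Oo Os) as [e2 [He2 C2]].
      exists (Rmin (e2/2) (r - 1/2)). split. apply Rmin_glb_lt; lra.
      intros y Hyr. pose proof (Rmin_l (e2/2) (r - 1/2)). pose proof (Rmin_r (e2/2) (r - 1/2)).
      destruct (Hy y) as [-> Hy1]. apply Rabs_def2 in Hyr.
      rewrite catp_r by (auto; lra). apply C2. apply abs_lt_of; lra.
  - intros O Oo a b Hab.
    assert (Main : forall u v, 0 <= u -> u <= v -> v <= 1 -> (forall w, u <= w <= v -> O (catp g1 g2 (clampI w))) ->
              circ X O (catp g1 g2 (clampI u)) (catp g1 g2 (clampI v))).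
    { intros u v Hu Huv Hv Hw.
      assert (CL : forall u v, 0 <= u -> u <= v -> v <= 1/2 -> (forall w, u <= w <= v -> O (catp g1 g2 (clampI w))) ->
                circ X O (catp g1 g2 (clampI u)) (catp g1 g2 (clampI v))).
      { intros p q ? ? ? Hq. rewrite !catp_l by lra. apply dipath_sub; auto; try lra.
        intros w Hw'. replace w with (2 * (w/2)) by lra. rewrite <- (catp_l g1 g2) by lra. apply Hq. lra. }
      assert (CR : forall u v, 1/2 <= u -> u <= v -> v <= 1 -> (forall w, u <= w <= v -> O (catp g1 g2 (clampI w))) ->
                circ X O (catp g1 g2 (clampI u)) (catp g1 g2 (clampI v))).
      { intros p q ? ? ? Hq. rewrite !catp_r by (auto; lra). apply dipath_sub; auto; try lra.
        intros w Hw'. replace w with (2 * ((w + 1)/2) - 1) by lra. rewrite <- (catp_r g1 g2) by (auto; lra). apply Hq. lra. }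
      destruct (Rle_or_lt v (1/2)). apply CL; auto.
      destruct (Rle_or_lt (1/2) u). apply CR; auto; lra.
      apply circ_trans with (catp g1 g2 (clampI (1/2))); auto.
      apply CL; try lra; intros; apply Hw; lra. apply CR; try lra; intros; apply Hw; lra. }
    destruct Hab as [Hab Hin]. rewrite <- (clampI_id a), <- (clampI_id b).
    destruct a as [a ha], b as [b hb]. simpl in *. apply Main; try lra.
    intros w Hw. apply Hin. simpl. rewrite clampR_id; lra.
Qed.

Lemma sheet_lift_dipath E B rho inh W V g : is_stream E -> sheet E B rho W V -> dipath B g -> (forall t, V (g t)) ->
  dipath E (fun t => sec E B rho inh W (g t)).
Proof.
  intros [HtE HcE] Hsh [Hgc Hgs] HV. pose proof Hsh as [Wo [Hh [_ Hst3]]]. split.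
  - intros O Oo t Ot.
    destruct (sec_open E B rho inh W V HtE Hsh O Oo (g t) (HV t) Ot) as [O' [O'o [O't HO']]].
    destruct (Hgc O' O'o t O't) as [e [He Hc]]. exists e. split; auto.
  - intros O Oo a b Hab.
    assert (HWO : opn (U E) (fun x => W x /\ O x)) by (destruct HtE as [_ [_ Hi]]; apply Hi; auto).
    assert (Hset : (fun z : pt (U dI) => O (sec E B rho inh W (g z))) = (fun z : pt (U dI) => image rho (fun x => W x /\ O x) (g z))).
    { apply set_ext. intros z. split.
      - intros Oz. exists (sec E B rho inh W (g z)). destruct (sec_spec E B rho inh W V (g z) Hh (HV z)). tauto.
      - intros [x [[Wx Ox] Hx]]. rewrite <- Hx. rewrite (sec_eq E B rho inh W V x Hh Wx). auto. }
    change (circ dI (fun z : pt (U dI) => O (sec E B rho inh W (g z))) a b) in Hab. rewrite Hset in Hab.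
    assert (Hio : opn (U B) (image rho (fun x => W x /\ O x))).
    { destruct Hh as [_ [_ [_ [_ H5]]]]. apply H5; auto. tauto. }
    apply Hgs in Hab; auto.
    destruct (sec_spec E B rho inh W V (g a) Hh (HV a)) as [Wa Ra].
    destruct (sec_spec E B rho inh W V (g b) Hh (HV b)) as [Wb Rb].
    rewrite <- Ra, <- Rb in Hab.
    apply (circ_mono E (fun x => W x /\ O x) O); auto. tauto.
    apply Hst3; auto. tauto.
Qed.

Lemma sheet_img (E B : Stream) (rho : pt (U E) -> pt (U B)) (W : set (pt (U E))) (V : set (pt (U B))) : homeo_onto rho W V -> image rho W = V.
Proof.
  intros [H1 [_ [H3 _]]]. apply set_ext. intros bb. split.
  - intros [x [Wx <-]]. apply H1; auto.
  - intros Vbb. destruct (H3 bb Vbb) as [x [Wx Hx]]. exists x; auto.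
Qed.

Lemma sheet_Vo E B rho W V : sheet E B rho W V -> opn (U B) V.
Proof.
  intros [Wo [Hh _]]. rewrite <- (sheet_img E B rho W V Hh). destruct Hh as [_ [_ [_ [_ H5]]]]. apply H5; auto.
Qed.

Lemma circ_dipath E B rho : is_stream E -> stream_covering E B rho -> path_ordered B ->
  forall x y, circ E full x y -> exists g, dipath E g /\ g I0 = x /\ g I1 = y.
Proof.
  intros HE Hc Hpo x y Hxy. pose proof HE as [HtE HcE]. pose proof HcE as [_ HcE2].
  set (Fm := fun W => exists V, sheet E B rho W V).
  destruct (HcE2 Fm) as [_ [_ Hmin]].
  { intros W [V [Wo _]]. auto. }
  assert (Hfull : union_fam Fm = full).
  { apply set_ext. intros e. split; [intros; exact I|]. intros _.
    destruct (cov_at E B rho Hc (rho e)) as [V [F' [Vb [Vo [Hsh [_ Hun]]]]]].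
    destruct (proj1 (Hun e) Vb) as [W [FW We]]. exists W. split; auto. exists V. auto. }
  set (Rl := fun x y => exists g, dipath E g /\ g I0 = x /\ g I1 = y).
  change (Rl x y). rewrite <- Hfull in Hxy. revert x y Hxy. apply Hmin.
  - split; [|split].
    + intros; rewrite Hfull; split; exact I.
    + intros z _. exists (fun _ => z). split; auto. apply const_dipath; auto.
    + intros a b c [g1 [H1 [H1a H1b]]] [g2 [H2 [H2a H2b]]].
      exists (catp g1 g2). split. apply catp_dipath; auto. congruence.
      split.
      * rewrite <- clampI_0, catp_l by lra. replace (2*0) with 0 by lra. rewrite clampI_0. auto.
      * rewrite <- clampI_1, catp_r by (auto; try congruence; lra). replace (2*1-1) with 1 by lra.
        rewrite clampI_1. auto.
  - intros a b [W [[V Hsh] Hab]].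
    pose proof Hsh as [Wo [Hh [Hst2 _]]].
    destruct (circ_dom E W a b HcE Wo Hab) as [Wa Wb].
    assert (HB : circ B V (rho a) (rho b)).
    { apply Hst2; [apply (sheet_Vo E B rho W V Hsh)|auto|].
      assert (Hs : (fun z => W z /\ V (rho z)) = W).
      { apply set_ext. intros z. split; [tauto|]. intros Wz. split; auto. destruct Hh as [H1 _]. auto. }
      rewrite Hs. auto. }
    destruct (Hpo V (sheet_Vo E B rho W V Hsh) (rho a) (rho b) HB) as [g [Hg [Hg0 [Hg1 HgV]]]].
    pose (inh := inhabits a).
    exists (fun t => sec E B rho inh W (g t)). split; [apply sheet_lift_dipath with V; auto|].
    split.
    + rewrite Hg0. apply (sec_eq E B rho inh W V); auto.
    + rewrite Hg1. apply (sec_eq E B rho inh W V); auto.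
Qed.


Lemma snd_le_dist z w : Rabs (snd (proj1_sig z) - snd (proj1_sig w)) <= S_dist z w.
Proof.
  unfold S_dist. rewrite <- sqrt_Rsqr_abs. apply sqrt_le_1_alt. unfold Rsqr.
  set (p := fst (proj1_sig z) - fst (proj1_sig w)). set (q := snd (proj1_sig z) - snd (proj1_sig w)).
  pose proof (pow2_ge_0 p). simpl in *. nra.
Qed.

Lemma S_unit (z : S_pt) : fst (proj1_sig z) * fst (proj1_sig z) + snd (proj1_sig z) * snd (proj1_sig z) = 1.
Proof. destruct z as [[x y] h]. simpl in *. nra. Qed.

Lemma abs_le_b x a : Rabs x <= a -> - a <= x <= a.
Proof. intros. pose proof (Rle_abs x). pose proof (Rle_abs (-x)). rewrite Rabs_Ropp in H1. lra. Qed.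

Definition hmap {X : Type} (g1 g2 : I_pt -> X) (z : S_pt) : X :=
  if Rle_dec 0 (snd (proj1_sig z)) then g1 (clampI ((1 - fst (proj1_sig z))/2))
  else g2 (clampI ((1 + fst (proj1_sig z))/2)).

Lemma hmap_up {X : Type} (g1 g2 : I_pt -> X) z : 0 <= snd (proj1_sig z) ->
  hmap g1 g2 z = g1 (clampI ((1 - fst (proj1_sig z))/2)).
Proof. intros. unfold hmap. destruct Rle_dec; auto; lra. Qed.

Lemma hmap_low {X : Type} (g1 g2 : I_pt -> X) z : g1 I0 = g2 I1 -> g1 I1 = g2 I0 -> snd (proj1_sig z) <= 0 ->
  hmap g1 g2 z = g2 (clampI ((1 + fst (proj1_sig z))/2)).
Proof.
  intros E0 E1 Hs. unfold hmap. destruct Rle_dec; auto.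
  pose proof (S_unit z). assert (snd (proj1_sig z) = 0) by lra.
  assert (Hf : (fst (proj1_sig z) - 1) * (fst (proj1_sig z) + 1) = 0) by nra.
  apply Rmult_integral in Hf. destruct Hf as [Hf|Hf].
  - replace (fst (proj1_sig z)) with 1 by lra.
    replace ((1-1)/2) with 0 by lra. replace ((1+1)/2) with 1 by lra. rewrite clampI_0, clampI_1. auto.
  - replace (fst (proj1_sig z)) with (-1) by lra.
    replace ((1- -1)/2) with 1 by lra. replace ((1+ -1)/2) with 0 by lra. rewrite clampI_0, clampI_1. auto.
Qed.

Lemma hmap_cont (X : Space) (g1 g2 : I_pt -> pt X) : continuous I_space X g1 -> continuous I_space X g2 ->
  g1 I0 = g2 I1 -> g1 I1 = g2 I0 -> continuous S_space X (hmap g1 g2).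
Proof.
  intros C1 C2 E0 E1 O Oo z Oz. simpl.
  set (x0 := fst (proj1_sig z)). set (y0 := snd (proj1_sig z)).
  assert (K1 : O (g1 (clampI ((1 - x0)/2))) -> exists e, 0 < e /\ forall w, S_dist z w < e ->
             O (g1 (clampI ((1 - fst (proj1_sig w))/2)))).
  { intros Ho. destruct (Ipath_cont X g1 C1 _ O Oo Ho) as [e [He Hc]]. exists (2*e). split; [lra|].
    intros w Hw. apply Hc. pose proof (fst_le_dist z w). apply abs_lt_of; apply abs_le_b in H; unfold x0; lra. }
  assert (K2 : O (g2 (clampI ((1 + x0)/2))) -> exists e, 0 < e /\ forall w, S_dist z w < e ->
             O (g2 (clampI ((1 + fst (proj1_sig w))/2)))).
  { intros Ho. destruct (Ipath_cont X g2 C2 _ O Oo Ho) as [e [He Hc]]. exists (2*e). split; [lra|].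
    intros w Hw. apply Hc. pose proof (fst_le_dist z w). apply abs_lt_of; apply abs_le_b in H; unfold x0; lra. }
  assert (Hsn : forall w, Rabs (snd (proj1_sig w) - y0) <= S_dist z w).
  { intros w. rewrite Rabs_minus_sym. apply snd_le_dist. }
  destruct (Rtotal_order y0 0) as [hl|[he|hg]].
  - rewrite hmap_low in Oz by (auto; unfold y0 in hl; lra).
    destruct (K2 Oz) as [e [He Hc]]. exists (Rmin e (-y0)). split. apply Rmin_glb_lt; lra.
    intros w Hw. pose proof (Rmin_l e (-y0)). pose proof (Rmin_r e (-y0)). pose proof (Hsn w).
    apply abs_le_b in H1.
    rewrite hmap_low by (auto; lra). apply Hc. lra.
  - pose proof Oz as Oz2. rewrite hmap_up in Oz by (unfold y0 in he; lra).
    rewrite hmap_low in Oz2 by (auto; unfold y0 in he; lra).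
    destruct (K1 Oz) as [e1 [He1 Hc1]]. destruct (K2 Oz2) as [e2 [He2 Hc2]].
    exists (Rmin e1 e2). split. apply Rmin_glb_lt; lra.
    intros w Hw. pose proof (Rmin_l e1 e2). pose proof (Rmin_r e1 e2).
    destruct (Rle_or_lt 0 (snd (proj1_sig w))).
    + rewrite hmap_up by auto. apply Hc1. lra.
    + rewrite hmap_low by (auto; lra). apply Hc2. lra.
  - rewrite hmap_up in Oz by (unfold y0 in hg; lra).
    destruct (K1 Oz) as [e [He Hc]]. exists (Rmin e y0). split. apply Rmin_glb_lt; lra.
    intros w Hw. pose proof (Rmin_l e y0). pose proof (Rmin_r e y0). pose proof (Hsn w).
    apply abs_le_b in H1.
    rewrite hmap_up by lra. apply Hc. lra.
Qed.

Lemma hcis_up {X : Type} (g1 g2 : I_pt -> X) s : 0 <= sin s -> hmap g1 g2 (cis s) = g1 (clampI ((1 - cos s)/2)).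
Proof. intros. apply hmap_up. simpl. auto. Qed.

Lemma hcis_low {X : Type} (g1 g2 : I_pt -> X) s : g1 I0 = g2 I1 -> g1 I1 = g2 I0 -> sin s <= 0 ->
  hmap g1 g2 (cis s) = g2 (clampI ((1 + cos s)/2)).
Proof. intros. apply hmap_low; auto. Qed.

Lemma pieceUp (X : Stream) g1 g2 O u v : dipath X g1 -> opn (U X) O -> u <= v -> v <= u + 1 ->
  (forall s, u <= s <= v -> 0 <= sin s) -> (forall s, u <= s <= v -> O (hmap g1 g2 (cis s))) ->
  circ X O (hmap g1 g2 (cis u)) (hmap g1 g2 (cis v)).
Proof.
  intros Hg Oo Huv Hv1 Hsin HO. pose proof PI_gt3.
  rewrite !hcis_up by (apply Hsin; lra).
  assert (Hcos : cos v <= cos u).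
  { pose proof (form2 u v).
    assert (0 <= sin ((v - u)/2)) by (apply sin_ge_0; lra).
    replace ((u - v)/2) with (- ((v - u)/2)) in H0 by lra. rewrite sin_neg in H0.
    assert (0 <= sin ((u + v)/2)) by (apply Hsin; lra). nra. }
  pose proof (COS_bound u). pose proof (COS_bound v).
  apply dipath_sub; auto; try lra.
  intros w Hw.
  destruct (IVT_cor (fun s => cos s - (1 - 2 * w)) u v (cont_cos_minus _) Huv) as [r [Hr Hc]].
  { nra. }
  replace w with ((1 - cos r)/2) by lra. rewrite <- hcis_up with (g2 := g2) by (apply Hsin; lra).
  apply HO; lra.
Qed.

Lemma pieceDown (X : Stream) g1 g2 O u v : dipath X g2 -> g1 I0 = g2 I1 -> g1 I1 = g2 I0 ->
  opn (U X) O -> u <= v -> v <= u + 1 ->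
  (forall s, u <= s <= v -> sin s <= 0) -> (forall s, u <= s <= v -> O (hmap g1 g2 (cis s))) ->
  circ X O (hmap g1 g2 (cis u)) (hmap g1 g2 (cis v)).
Proof.
  intros Hg E0 E1 Oo Huv Hv1 Hsin HO. pose proof PI_gt3.
  rewrite !hcis_low by (auto; apply Hsin; lra).
  assert (Hcos : cos u <= cos v).
  { pose proof (form2 v u).
    assert (0 <= sin ((v - u)/2)) by (apply sin_ge_0; lra).
    assert (sin ((v + u)/2) <= 0) by (apply Hsin; lra). nra. }
  pose proof (COS_bound u). pose proof (COS_bound v).
  apply dipath_sub; auto; try lra.
  intros w Hw.
  destruct (IVT_cor (fun s => cos s - (2 * w - 1)) u v (cont_cos_minus _) Huv) as [r [Hr Hc]].
  { nra. }
  replace w with ((1 + cos r)/2) by lra. rewrite <- hcis_low with (g1 := g1) by (auto; apply Hsin; lra).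
  apply HO; lra.
Qed.

Lemma hmap_stream (X : Stream) g1 g2 : is_stream X -> dipath X g1 -> dipath X g2 ->
  g1 I0 = g2 I1 -> g1 I1 = g2 I0 -> stream_map dS X (hmap g1 g2).
Proof.
  intros [HtX HcX] H1 H2 E0 E1. split.
  - apply hmap_cont; auto. apply H1. apply H2.
  - intros O Oo z z' [th [th' [Hth [-> [-> HO]]]]].
    pose proof PI_gt3.
    apply (cousin (fun u v => circ X O (hmap g1 g2 (cis u)) (hmap g1 g2 (cis v))) th th' Hth).
    2:{ intros p q r _ _ _ _ ? ?. apply circ_trans with (hmap g1 g2 (cis q)); auto. }
    intros t Ht.
    destruct (Rtotal_order (sin t) 0) as [hl|[he|hg]].
    + exists (Rmin 1 (- sin t)). split. apply Rmin_glb_lt; lra.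
      intros p q ? ? ? ? ?. pose proof (Rmin_l 1 (-sin t)). pose proof (Rmin_r 1 (-sin t)).
      apply pieceDown; auto; try lra.
      * intros s Hs. pose proof (sin_lip s t) as Hl. apply abs_le_b in Hl.
        assert (Hst : Rabs (s - t) < - sin t) by (apply abs_lt_of; lra). lra.
      * intros s Hs. apply HO. lra.
    + exists 1. split; [lra|].
      intros p q ? ? ? ? ?.
      pose proof (sin2_cos2 t) as Hsc. unfold Rsqr in Hsc. rewrite he in Hsc.
      assert (Hc : (cos t - 1) * (cos t + 1) = 0) by nra.
      assert (HR : forall s, t <= s <= q -> sin s = cos t * sin (s - t)).
      { intros s Hs. replace s with (t + (s - t)) at 1 by lra. rewrite sin_plus, he. ring. }
      assert (HL : forall s, p <= s <= t -> sin s = - cos t * sin (t - s)).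
      { intros s Hs. replace s with (t - (t - s)) at 1 by lra. rewrite sin_minus, he. ring. }
      assert (SR : forall s, t <= s <= q -> 0 <= sin (s - t)) by (intros; apply sin_ge_0; lra).
      assert (SL : forall s, p <= s <= t -> 0 <= sin (t - s)) by (intros; apply sin_ge_0; lra).
      apply circ_trans with (hmap g1 g2 (cis t)); auto.
      * apply Rmult_integral in Hc. destruct Hc as [Hc|Hc].
        -- apply pieceDown; auto; try lra.
           ++ intros s Hs. rewrite HL by lra. specialize (SL s Hs). replace (cos t) with 1 by lra. lra.
           ++ intros; apply HO; lra.
        -- apply pieceUp; auto; try lra.
           ++ intros s Hs. rewrite HL by lra. specialize (SL s Hs). replace (cos t) with (-1) by lra. lra.
           ++ intros; apply HO; lra.
      * apply Rmult_integral in Hc. destruct Hc as [Hc|Hc].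
        -- apply pieceUp; auto; try lra.
           ++ intros s Hs. rewrite HR by lra. specialize (SR s Hs). replace (cos t) with 1 by lra. lra.
           ++ intros; apply HO; lra.
        -- apply pieceDown; auto; try lra.
           ++ intros s Hs. rewrite HR by lra. specialize (SR s Hs). replace (cos t) with (-1) by lra. lra.
           ++ intros; apply HO; lra.
    + exists (Rmin 1 (sin t)). split. apply Rmin_glb_lt; lra.
      intros p q ? ? ? ? ?. pose proof (Rmin_l 1 (sin t)). pose proof (Rmin_r 1 (sin t)).
      apply pieceUp; auto; try lra.
      * intros s Hs. pose proof (sin_lip s t) as Hl. apply abs_le_b in Hl.
        assert (Hst : Rabs (s - t) < sin t) by (apply abs_lt_of; lra). lra.
      * intros s Hs. apply HO. lra.
Qed.


Lemma dir21 E B rho : is_stream E -> is_stream B -> universal_stream_covering E B rho -> path_ordered B ->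
  (forall f : pt (U dS) -> pt (U B),
      stream_map dS B f -> null_homotopic (U dS) (U B) f ->
      forall z z', f z = f z') ->
  forall x y, circ E full x y -> circ E full y x -> x = y.
Proof.
  intros HE HB [Hc [_ [_ Hsc]]] Hpo H2 x y Hxy Hyx.
  apply NNPP. intros Hne.
  destruct (circ_dipath E B rho HE Hc Hpo x y Hxy) as [g1 [Hg1 [Hg1a Hg1b]]].
  destruct (circ_dipath E B rho HE Hc Hpo y x Hyx) as [g2 [Hg2 [Hg2a Hg2b]]].
  assert (E0 : g1 I0 = g2 I1) by congruence.
  assert (E1 : g1 I1 = g2 I0) by congruence.
  pose proof (hmap_stream E g1 g2 HE Hg1 Hg2 E0 E1) as [hC hS].
  pose proof Hc as [[rhoC rhoS] _].
  assert (Hf : stream_map dS B (fun z => rho (hmap g1 g2 z))).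
  { split.
    - intros V Vo. apply (hC (fun e => V (rho e))). apply rhoC; auto.
    - intros V Vo z z' Hzz. apply (rhoS V Vo). apply (hS (fun e => V (rho e)) (rhoC V Vo)). exact Hzz. }
  assert (Hnh : null_homotopic (U dS) (U B) (fun z => rho (hmap g1 g2 z))).
  { destruct (Hsc (hmap g1 g2) hC) as [Hh [HhC [Hh0 [c Hh1]]]].
    exists (fun p => rho (Hh p)). split; [|split].
    - intros V Vo. apply (HhC (fun e => V (rho e))). apply rhoC; auto.
    - intros z. simpl. rewrite Hh0. auto.
    - exists (rho c). intros z. rewrite Hh1. auto. }
  pose proof (H2 _ Hf Hnh) as Hconst.
  pose proof PI_gt3.
  assert (Hcis0 : hmap g1 g2 (cis 0) = x).
  { rewrite hcis_up by (rewrite sin_0; lra). rewrite cos_0. replace ((1-1)/2) with 0 by lra.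
    rewrite clampI_0. auto. }
  assert (Hr : forall r, 0 <= r <= 1 -> rho (g1 (clampI r)) = rho x).
  { intros r Hr.
    destruct (IVT_cor (fun s => cos s - (1 - 2 * r)) 0 PI (cont_cos_minus _) ltac:(lra)) as [th [Hth Hcth]].
    { rewrite cos_0, cos_PI. nra. }
    assert (Hs : 0 <= sin th) by (apply sin_ge_0; lra).
    pose proof (hcis_up g1 g2 th Hs) as Hh.
    replace ((1 - cos th)/2) with r in Hh by lra. rewrite <- Hh, <- Hcis0. apply Hconst. }
  assert (Hcont1 : cont1 (U E) 0 1 (fun r => g1 (clampI r))).
  { intros t Ht O Oo Ot. destruct (Ipath_cont _ g1 (proj1 Hg1) t O Oo Ot) as [e [He Hc']].
    exists e. split; auto. }
  assert (Hu : g1 (clampI 1) = x).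
  { apply (lift_unique E B rho Hc 0 1 (fun r => g1 (clampI r)) (fun _ => x)) with (t0 := 0); try lra.
    - auto.
    - intros t Ht O Oo Ot. exists 1. split; [lra|]. auto.
    - intros t Ht. apply Hr; auto.
    - simpl. rewrite clampI_0. auto. }
  apply Hne. rewrite clampI_1 in Hu. congruence.
Qed.


Theorem mainTheorem3 (E B : Stream) (rho : pt (U E) -> pt (U B)) :
  is_stream E -> is_stream B ->
  universal_stream_covering E B rho ->
  path_ordered B ->
  ((forall x y, circ E full x y -> circ E full y x -> x = y)
   <->
   (forall f : pt (U dS) -> pt (U B),
      stream_map dS B f -> null_homotopic (U dS) (U B) f ->
      forall z z', f z = f z')).
Proof.
  intros HE HB Hu Hpo. split.
  - intros Hanti. apply (dir12 E B rho HE HB Hu Hanti).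
  - intros H2. apply (dir21 E B rho HE HB Hu Hpo H2).
Qed.
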